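(* Let $P\subseteq\mathbb{R}^d$ and $P'\subseteq\mathbb{R}^{d'}$ be nonempty polyhedra such that $P'$ is the image of a face of $P$ under an affine map. If $P$ admits a MILEF of complexity $(m,k)$, then $P'$ also admits a MILEF of complexity $(m,k)$.
   Context: A MILEF of complexity $(m,k)$ of a convex set $P\subseteq\mathbb{R}^d$ is a triple $(Q,\sigma,\pi)$ where $Q\subseteq\mathbb{R}^\ell$ is a polyhedron with at most $m$ facets, and $\sigma:\mathbb{R}^\ell\to\mathbb{R}^k$, $\pi:\mathbb{R}^\ell\to\mathbb{R}^d$ are affine maps with $P=\operatorname{conv}(\pi(Q\cap\sigma^{-1}(\mathbb{Z}^k)))$. *)

(* Defs.v *)
From HB Require Import structures.
From mathcomp Require Import all_boot all_order all_algebra.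
From mathcomp Require Import classical_sets reals.
Set Implicit Arguments. Unset Strict Implicit. Unset Printing Implicit Defensive.
Import Order.TTheory GRing.Theory Num.Theory.
Local Open Scope ring_scope.
Local Open Scope classical_set_scope.

Section Defs.
Variable R : realType.

Definition polyhedron (n : nat) (P : set 'cV[R]_n) : Prop :=
  exists (p : nat) (A : 'M[R]_(p, n)) (b : 'cV[R]_p),
    P = [set x | forall i : 'I_p, (A *m x) i 0 <= b i 0].

Definition is_affine (n p : nat) (f : 'cV[R]_n -> 'cV[R]_p) : Prop :=
  exists (M : 'M[R]_(p, n)) (c : 'cV[R]_p), forall x, f x = M *m x + c.

(* F is a face of P: F = P ∩ {c^T x = delta} for a valid inequality c^T x <= delta
   (this includes P itself and possibly the empty face). *)
Definition is_face (n : nat) (P F : set 'cV[R]_n) : Prop :=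
  exists (c : 'cV[R]_n) (delta : R),
    (forall x, P x -> (c^T *m x) 0 0 <= delta) /\
    F = [set x | P x /\ (c^T *m x) 0 0 = delta].

(* S contains k+1 affinely independent points *)
Definition aff_indep_pts (n : nat) (S : set 'cV[R]_n) (k : nat) : Prop :=
  exists (x0 : 'cV[R]_n) (X : 'M[R]_(n, k)),
    S x0 /\ (forall j : 'I_k, S (x0 + col j X)) /\ \rank X = k.

Definition has_dim (n : nat) (S : set 'cV[R]_n) (k : nat) : Prop :=
  aff_indep_pts S k /\ ~ aff_indep_pts S k.+1.

Definition is_facet (n : nat) (Q F : set 'cV[R]_n) : Prop :=
  is_face Q F /\ exists k : nat, has_dim Q k.+1 /\ has_dim F k.

Definition at_most_facets (n : nat) (Q : set 'cV[R]_n) (m : nat) : Prop :=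
  exists fs : 'I_m -> set 'cV[R]_n, forall F, is_facet Q F -> exists i, F = fs i.

Definition conv (n : nat) (S : set 'cV[R]_n) : set 'cV[R]_n :=
  [set x | exists (N : nat) (lam : 'I_N -> R) (pts : 'I_N -> 'cV[R]_n),
     (forall i, S (pts i)) /\ (forall i, 0 <= lam i) /\
     \sum_(i < N) lam i = 1 /\ x = \sum_(i < N) lam i *: pts i].

Definition intvec (k : nat) : set 'cV[R]_k :=
  [set v | forall i : 'I_k, v i 0 \is a Num.int].

Definition has_MILEF (d m k : nat) (P : set 'cV[R]_d) : Prop :=
  exists (l : nat) (Q : set 'cV[R]_l) (sigma : 'cV[R]_l -> 'cV[R]_k)
         (pi : 'cV[R]_l -> 'cV[R]_d),
    polyhedron Q /\ at_most_facets Q m /\ is_affine sigma /\ is_affine pi /\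
    P = conv (pi @` (Q `&` (sigma @^-1` @intvec k))).

End Defs.

(* Main.v *)
Require Import Defs.
From HB Require Import structures.
From mathcomp Require Import all_boot all_order all_algebra.
From mathcomp Require Import boolp classical_sets reals.
From mathcomp Require Import zify ring lra.
Set Implicit Arguments. Unset Strict Implicit. Unset Printing Implicit Defensive.
Import Order.TTheory GRing.Theory Num.Theory.
Local Open Scope ring_scope.
Local Open Scope classical_set_scope.

Section Aux.
Variable R : realType.

Lemma rank_inj (n k : nat) (X : 'M[R]_(n,k)) :
  \rank X = k <-> (forall w : 'cV[R]_k, X *m w = 0 -> w = 0).
Proof.
split.
- move=> rX w Xw; have fr : row_free X^T by rewrite /row_free mxrank_tr rX.
  apply: trmx_inj; rewrite trmx0; apply: (row_free_inj fr).
  by rewrite /= -trmx_mul Xw trmx0 mul0mx.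
- move=> H; rewrite -mxrank_tr; apply/eqP; rewrite -/(row_free _) -kermx_eq0.
  apply/eqP/row_matrixP => i; rewrite row0.
  have : row i (kermx X^T) *m X^T = 0 by apply/sub_kermxP; exact: row_sub.
  move=> h; apply: trmx_inj; rewrite trmx0; apply: H.
  by rewrite -[X in X *m _]trmxK -trmx_mul h trmx0.
Qed.


Lemma col_mul' m n p (A : 'M[R]_(m,n)) (B : 'M[R]_(n,p)) j :
  col j (A *m B) = A *m col j B.
Proof. by rewrite !colE mulmxA. Qed.

Lemma mul_entry m n p (A : 'M[R]_(m,n)) (B : 'M[R]_(n,p)) i j :
  (A *m B) i j = (A *m col j B) i 0.
Proof. by rewrite colE mulmxA -colE [in RHS]mxE. Qed.

Lemma entryB m n (A B : 'M[R]_(m,n)) i j : (A - B) i j = A i j - B i j.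
Proof. by rewrite !mxE. Qed.
Lemma entryD m n (A B : 'M[R]_(m,n)) i j : (A + B) i j = A i j + B i j.
Proof. by rewrite !mxE. Qed.
Lemma entryZ m n a (A : 'M[R]_(m,n)) i j : (a *: A) i j = a * A i j.
Proof. by rewrite !mxE. Qed.
Lemma entryN m n (A : 'M[R]_(m,n)) i j : (- A) i j = - A i j.
Proof. by rewrite !mxE. Qed.
Lemma entry0 m n i j : (0 : 'M[R]_(m,n)) i j = 0.
Proof. by rewrite !mxE. Qed.

Lemma mul11 p (a : 'M[R]_1) (u : 'M[R]_(1,p)) : a *m u = a 0 0 *: u.
Proof. by apply/matrixP => i j; rewrite !mxE big_ord1 (ord1 i). Qed.

Lemma aff_mono n (S : set 'cV[R]_n) k : aff_indep_pts S k.+1 -> aff_indep_pts S k.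
Proof.
move=> [x0 [X [Sx0 [SX rX]]]].
pose X1 : 'M[R]_(n, 1 + k) := X.
exists x0, (rsubmx X1); split=> //; split.
  move=> j; have -> : col j (rsubmx X1) = col (rshift 1 j) X by apply/matrixP=> i l; rewrite !mxE.
  exact: SX.
apply/rank_inj => w Xw.
have /rank_inj H := rX.
have H1 : forall v : 'cV[R]_(1 + k), X1 *m v = 0 -> v = 0 := H.
have := H1 (col_mx (0 : 'cV[R]_1) w).
rewrite -[X1]hsubmxK mul_row_col mulmx0 add0r.
move=> /(_ Xw) h; by rewrite -(col_mxKd (0 : 'cV[R]_1) w) h; apply/matrixP=> i j; rewrite !mxE.
Qed.

Lemma aff_ext n (G S : set 'cV[R]_n) (c : 'cV[R]_n) (g : R) s z :
  aff_indep_pts G s -> G `<=` S -> (forall x, G x -> (c^T *m x) 0 0 = g) ->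
  S z -> (c^T *m z) 0 0 != g -> aff_indep_pts S s.+1.
Proof.
move=> [x0 [X [Gx0 [GX rX]]]] GS Gc Sz cz.
pose X2 : 'M[R]_(n, 1 + s) := row_mx (z - x0) X.
exists x0, X2; split; first exact: GS.
split.
  move=> j; rewrite -(splitK (j : 'I_(1 + s))); case: (split _) => j' /=.
    have -> : col (lshift s j') X2 = z - x0.
      by apply/matrixP=> i l; rewrite mxE (row_mxEl (z - x0) X) (ord1 l) (ord1 j').
    by rewrite [z - x0]addrC addrA subrr add0r.
  have -> : col (rshift 1 j') X2 = col j' X.
    by apply/matrixP=> i l; rewrite mxE (row_mxEr (z - x0) X) mxE.
  by apply: GS; apply: GX.
apply/rank_inj => w Xw.
have cX : c^T *m X = 0.
  apply/matrixP => i j; rewrite mul_entry (ord1 i).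
  have -> : col j X = (x0 + col j X) - x0 by rewrite [x0 + _]addrC addrK.
  by rewrite mulmxBr entryB (Gc _ Gx0) (Gc _ (GX j)) subrr entry0.
pose w1 : 'cV[R]_(1 + s) := w.
have Xw1 : X2 *m w1 = 0 := Xw.
rewrite -[w1]vsubmxK mul_row_col in Xw1.
have := congr1 (mulmx c^T) Xw1.
rewrite mulmx0 mulmxDr !mulmxA cX mul0mx addr0 => h.
have u0 : usubmx w1 = 0.
  move: h; rewrite mul11 => /eqP; rewrite scaler_eq0 => /orP [|/eqP //].
  by rewrite mulmxBr entryB (Gc _ Gx0) subr_eq0 (negPf cz).
rewrite u0 mulmx0 add0r in Xw1.
have d0 : dsubmx w1 = 0 by apply: (proj1 (rank_inj X) rX).
have : w1 = 0 by rewrite -[w1]vsubmxK u0 d0 col_mx0.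
by [].
Qed.

Lemma aff_le n (S : set 'cV[R]_n) r t : aff_indep_pts S r -> (t <= r)%N -> aff_indep_pts S t.
Proof.
move=> H; elim: r H => [|r IH] H tr; first by move: tr; rewrite leqn0 => /eqP ->.
move: tr; rewrite leq_eqVlt => /orP [/eqP -> //|]; rewrite ltnS => tr.
exact: (IH (aff_mono H)).
Qed.

Lemma aff_sub n (S T : set 'cV[R]_n) k : S `<=` T -> aff_indep_pts S k -> aff_indep_pts T k.
Proof.
move=> ST [x0 [X [Sx0 [SX rX]]]]; exists x0, X; split; first exact: ST.
by split=> // j; apply: ST.
Qed.

Lemma aff_bound n (S : set 'cV[R]_n) k : aff_indep_pts S k -> (k <= n)%N.
Proof. by move=> [x0 [X [_ [_ rX]]]]; rewrite -rX rank_leq_row. Qed.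

Lemma dim_max n (S : set 'cV[R]_n) j : aff_indep_pts S j ->
  exists d, has_dim S d /\ (j <= d)%N.
Proof.
suff : forall e j, (n - j <= e)%N -> aff_indep_pts S j -> exists d, has_dim S d /\ (j <= d)%N.
  by move=> /(_ (n - j)%N j (leqnn _)).
elim=> [|e IH] {}j ej Sj.
  case: (pselect (aff_indep_pts S j.+1)) => [/aff_bound|nS]; last by exists j.
  move=> h; exfalso; lia.
case: (pselect (aff_indep_pts S j.+1)) => [Sj1|nS]; last by exists j.
have [|d [hd jd]] := IH j.+1 _ Sj1; last by exists d; split=> //; apply: ltnW.
have := aff_bound Sj1; lia.
Qed.

Lemma eps_fin (I : finType) (P : I -> Prop) (u v : I -> R) :
  (forall i, P i -> u i < 0) -> exists e : R, 0 < e /\ forall i, P i -> u i + e * v i < 0.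
Proof.
move=> Hu.
pose S := \sum_i `|v i| / `|u i|.
have S0 : 0 <= S by apply: sumr_ge0 => i _; rewrite divr_ge0.
exists (1 + S)^-1; split; first by rewrite invr_gt0; lra.
move=> i Pi; have ui := Hu i Pi.
have le : `|v i| / `|u i| <= S.
  rewrite /S (bigD1 i) //=; rewrite lerDl; apply: sumr_ge0 => j _; by rewrite divr_ge0.
have yp : 0 < `|u i| by rewrite normr_gt0; apply: ltr0_neq0.
have xle : `|v i| <= S * `|u i| by rewrite -ler_pdivrMr.
have ee : (1 + S)^-1 * (1 + S) = 1 by rewrite mulVf //; lra.
have ep : 0 < (1 + S)^-1 by rewrite invr_gt0; lra.
set e := (1 + S)^-1 in ee ep *.
have vle : e * v i <= e * `|v i| by rewrite ler_pM2l // ler_norm.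
have nu : `|u i| = - u i by rewrite ltr0_norm.
rewrite nu in yp xle.
nra.
Qed.

Lemma mulmid m n (A : 'M[R]_(m,n)) (x y : 'cV[R]_n) i :
  (A *m (2^-1 *: (x + y))) i 0 = 2^-1 * ((A *m x) i 0 + (A *m y) i 0).
Proof. by rewrite -scalemxAr mulmxDr entryZ entryD. Qed.

Lemma relint n p (S : set 'cV[R]_n) (A : 'M[R]_(p,n)) (b : 'cV[R]_p) x0 :
  (forall x y, S x -> S y -> S (2^-1 *: (x + y))) -> S x0 ->
  (forall x, S x -> forall i, (A *m x) i 0 <= b i 0) ->
  exists x, S x /\ forall i, (exists y, S y /\ (A *m y) i 0 < b i 0) -> (A *m x) i 0 < b i 0.
Proof.
move=> mid Sx0 Hb.
suff H : forall N, exists x, S x /\ forall i : 'I_p, (i < N)%N ->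
    (exists y, S y /\ (A *m y) i 0 < b i 0) -> (A *m x) i 0 < b i 0.
  by have [x [Sx Hx]] := H p; exists x; split=> // i; apply: Hx; exact: ltn_ord.
elim=> [|N [x [Sx Hx]]]; first by exists x0.
case: (pselect (exists i : 'I_p, val i = N /\ exists y, S y /\ (A *m y) i 0 < b i 0)).
  move=> [i0 [vi [y [Sy yi]]]]; exists (2^-1 *: (x + y)); split; first exact: mid.
  move=> i iN ex; rewrite mulmid; have := Hb x Sx i; have := Hb y Sy i.
  case: (ltnP i N) => iN'.
    by have := Hx i iN' ex; lra.
  have ei : i = i0 by apply: val_inj; rewrite /= vi; apply/eqP; rewrite eqn_leq iN'; rewrite -ltnS iN.
  by rewrite ei in ex * => *; lra.
move=> nex; exists x; split=> // i iN ex.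
case: (ltnP i N) => iN'; first exact: Hx.
exfalso; apply: nex; exists i; split=> //.
by apply/eqP; rewrite eqn_leq iN'; rewrite -ltnS iN.
Qed.

Definition hset n p (A : 'M[R]_(p,n)) (b : 'cV[R]_p) : set 'cV[R]_n :=
  [set x | forall i, (A *m x) i 0 <= b i 0].

Lemma hset_mid n p (A : 'M[R]_(p,n)) b x y :
  hset A b x -> hset A b y -> hset A b (2^-1 *: (x + y)).
Proof. move=> hx hy i; rewrite mulmid; have := hx i; have := hy i; lra. Qed.

Lemma rowE' n p (A : 'M[R]_(p,n)) j (x : 'cV[R]_n) :
  ((row j A)^T^T *m x) 0 0 = (A *m x) j 0.
Proof. by rewrite trmxK -row_mul mxE. Qed.

Lemma Ent n p (A : 'M[R]_(p,n)) (x X : 'M[R]_(n,1+0)) (e : R) i :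
  (A *m (x + e *: X)) i 0 = (A *m x) i 0 + e * (A *m X) i 0.
Proof. by rewrite mulmxDr -scalemxAr entryD entryZ. Qed.

Lemma facet_row n p (A : 'M[R]_(p,n)) (b : 'cV[R]_p) (j : 'I_p) z :
  (forall p' (A' : 'M[R]_(p',n)) b', hset A b = hset A' b' -> (p <= p')%N) ->
  hset A b z -> (A *m z) j 0 < b j 0 ->
  is_facet (hset A b) [set x | hset A b x /\ ((row j A)^T^T *m x) 0 0 = b j 0].
Proof.
case: p A b j => [|p'] A b j; first by case: j.
move=> minp Qz zj.
have [y [yQ yj]] : exists y : 'cV[R]_n, (forall i, i != j -> (A *m y) i 0 <= b i 0) /\ b j 0 < (A *m y) j 0.
  apply: contrapT => nex.
  pose A' : 'M[R]_(p', n) := \matrix_(i, k) A (lift j i) k.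
  pose b' : 'cV[R]_p' := \matrix_(i, k) b (lift j i) k.
  have eA (x : 'cV[R]_n) i : (A' *m x) i 0 = (A *m x) (lift j i) 0.
    by rewrite !mxE; apply: eq_bigr => k _; rewrite mxE.
  suff /minp : hset A b = hset A' b' by rewrite ltnn.
  apply/seteqP; split=> x hx i.
    by rewrite eA [b' _ _]mxE; apply: hx.
  case: (unliftP j i) => [i' ->|->].
    by have := hx i'; rewrite eA [b' _ _]mxE.
  rewrite leNgt; apply/negP => xj; apply: nex; exists x; split=> //.
  move=> i0 ij; case: (unliftP j i0) => [i' e|e]; last by rewrite e eqxx in ij.
  by have := hx i'; rewrite eA [b' _ _]mxE e.
have [xr [xrQ xrs]] := relint (@hset_mid n _ A b) Qz (fun x hx => hx).
have xrj : (A *m xr) j 0 < b j 0 by apply: xrs; exists z.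
pose th := (b j 0 - (A *m xr) j 0) / ((A *m y) j 0 - (A *m xr) j 0).
have th0 : 0 < th by apply: divr_gt0; lra.
have th1 : th < 1 by rewrite /th ltr_pdivrMr; lra.
pose w := xr + th *: (y - xr).
have Ew i : (A *m w) i 0 = (A *m xr) i 0 + th * ((A *m y) i 0 - (A *m xr) i 0).
  by rewrite mulmxDr -scalemxAr mulmxBr entryD entryZ entryB.
have wj : (A *m w) j 0 = b j 0.
  rewrite Ew /th divfK; first lra.
  by apply/eqP => h; lra.
have ws i : i != j -> (exists y0, hset A b y0 /\ (A *m y0) i 0 < b i 0) -> (A *m w) i 0 < b i 0.
  move=> ij ex; have := xrs i ex; have := yQ i ij; rewrite Ew; nra.
have wQ : hset A b w.
  move=> i; case: (eqVneq i j) => [->|ij]; first by rewrite wj.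
  have := xrQ i; have := yQ i ij; rewrite Ew; nra.
pose c := (row j A)^T.
have cE x : (c^T *m x) 0 0 = (A *m x) j 0 := rowE' A j x.
have aff0 : aff_indep_pts [set w] 0.
  exists w, 0; split=> //; split; first by case.
  by apply/eqP; rewrite -leqn0 rank_leq_col.
have aff1 : aff_indep_pts (hset A b) 1.
  apply: (aff_ext (c := c) (g := b j 0) aff0) => //.
  - by move=> x ->.
  - by move=> x ->; rewrite cE.
  - by rewrite cE; apply/eqP => h; lra.
have [[|t] [[hQ1 hQ2] d1]] := dim_max aff1; first by [].
pose Fj := [set x | hset A b x /\ (c^T *m x) 0 0 = b j 0].
have up : ~ aff_indep_pts Fj t.+1.
  move=> h; apply: hQ2; apply: (aff_ext (c := c) (g := b j 0) h) => //.
  - by move=> x [].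
  - by move=> x [].
  - by rewrite cE; apply/eqP => h'; lra.
suff low : aff_indep_pts Fj t.
  split; last by exists t.
  exists c, (b j 0); split=> // x hx; rewrite cE; exact: hx.
have [y0 [Y [Qy0 [QY rY]]]] := hQ1.
pose imp i := `[< forall y, hset A b y -> (A *m y) i 0 = b i 0 >].
pose B : 'M[R]_(p'.+1, n) := \matrix_(i, k) (if imp i then A i k else 0).
have BE r (V : 'M[R]_(n, r)) i l : (B *m V) i l = if imp i then (A *m V) i l else 0.
  rewrite !mxE; case hi: (imp i).
    by apply: eq_bigr => k _; rewrite mxE hi.
  by apply: big1 => k _; rewrite mxE hi mul0r.
have nimpj : imp j = false.
  apply/negbTE/negP => /asboolP h; have := h z Qz; lra.
have BY : B *m Y = 0.
  apply/matrixP => i l; rewrite BE entry0; case: ifP => // /asboolP hi.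
  rewrite mul_entry.
  have -> : col l Y = (y0 + col l Y) - y0 by rewrite [y0 + _]addrC addrK.
  by rewrite mulmxBr entryB (hi _ Qy0) (hi _ (QY l)) subrr.
pose D := delta_mx j (0 : 'I_1) *m row j A.
pose Bj := B + D.
have rBj : (\rank Bj <= \rank B + 1)%N.
  apply: leq_trans (mxrank_add _ _) _; rewrite leq_add2l.
  apply: leq_trans (mxrankM_maxl _ _) _; exact: rank_leq_col.
pose Kb := kermx Bj^T.
pose X := (row_base Kb)^T.
have rX : \rank X = \rank Kb by rewrite mxrank_tr; apply/eqP; exact: row_base_free.
have BjX : Bj *m X = 0.
  apply: trmx_inj; rewrite trmx_mul trmxK trmx0; apply/sub_kermxP.
  by rewrite eq_row_base submx_refl.
have rKb : \rank Kb = (n - \rank Bj)%N by rewrite mxrank_ker mxrank_tr.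
have rYle : (t.+1 <= n - \rank B)%N.
  rewrite -rY.
  have : (Y^T <= kermx B^T)%MS by apply/sub_kermxP; rewrite -trmx_mul BY trmx0.
  by move/mxrankS; rewrite mxrank_ker !mxrank_tr.
have tle : (t <= \rank Kb)%N by rewrite rKb; have := rank_leq_col B; lia.
have DE i l : (D *m X) i l = (i == j)%:R * (A *m X) j l.
  by rewrite -mulmxA mxE big_ord1 mxE -row_mul mxE eqxx andbT.
have AX i l : imp i || (i == j) -> (A *m X) i l = 0.
  have := congr1 (fun M : 'M[R]_(p'.+1, \rank Kb) => M i l) BjX; rewrite /= /Bj mulmxDl entryD BE entry0 DE.
  case hi: (imp i) => /=.
    have -> : (i == j) = false by apply/negbTE/eqP => e; rewrite e nimpj in hi.
    by rewrite mul0r addr0.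
  by move=> h /eqP e; rewrite e eqxx mul1r add0r in h; rewrite e.
have [e [e0 He]] : exists e : R, 0 < e /\ forall il : 'I_p'.+1 * 'I_(\rank Kb),
    (il.1 != j /\ exists y0, hset A b y0 /\ (A *m y0) il.1 0 < b il.1 0) ->
    ((A *m w) il.1 0 - b il.1 0) + e * (A *m X) il.1 il.2 < 0.
  apply: eps_fin => il [ij ex]; have := ws _ ij ex; lra.
apply: (aff_le _ tle).
exists w, (e *: X); split; first by split=> //; rewrite cE.
split; last by rewrite mxrank_scale_nz ?rX //; apply/eqP => h; lra.
move=> l; have -> : col l (e *: X) = e *: col l X by apply/matrixP => a b0; rewrite !mxE.
split.
  move=> i; rewrite Ent -mul_entry.
  case hi: (imp i || (i == j)); first by rewrite AX // mulr0 addr0; apply: wQ.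
  case: (pselect (exists y0, hset A b y0 /\ (A *m y0) i 0 < b i 0)) => [ex|nex].
    have ij : i != j by apply/negP => /eqP e'; rewrite e' eqxx orbT in hi.
    by have := He (i, l) (conj ij ex); rewrite /=; lra.
  exfalso; move: hi; suff -> : imp i by [].
  apply/asboolP => y1 hy1; apply/eqP; rewrite eq_le hy1 /= leNgt; apply/negP => h.
  by apply: nex; exists y1.
have ajl : (A *m X) j l = 0 by apply: AX; rewrite eqxx orbT.
by rewrite cE Ent -mul_entry ajl mulr0 addr0.
Qed.


Lemma eq_mid n (c : 'cV[R]_n) g (x y : 'cV[R]_n) :
  (c^T *m x) 0 0 = g -> (c^T *m y) 0 0 = g -> (c^T *m (2^-1 *: (x + y))) 0 0 = g.
Proof. by move=> hx hy; rewrite mulmid hx hy; field. Qed.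

Lemma min_desc n (Q : set 'cV[R]_n) : polyhedron Q ->
  exists p (A : 'M[R]_(p,n)) b, Q = hset A b /\
    forall p' (A' : 'M[R]_(p',n)) b', hset A b = hset A' b' -> (p <= p')%N.
Proof.
move=> [p0 [A0 [b0 E0]]].
have ex : exists p, `[< exists (A : 'M[R]_(p,n)) b, Q = hset A b >].
  by exists p0; apply/asboolP; exists A0, b0.
case: (ex_minnP ex) => p /asboolP [A [b QE]] minp.
exists p, A, b; split=> // p' A' b' e; apply: minp; apply/asboolP.
by exists A', b'; rewrite QE e.
Qed.

Lemma facet_section n (Q : set 'cV[R]_n) (h : 'cV[R]_n) (eta : R) m :
  polyhedron Q -> at_most_facets Q m ->
  at_most_facets (Q `&` [set y | (h^T *m y) 0 0 = eta]) m.
Proof.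
move=> polyQ [fs Hfs].
set H := [set y | (h^T *m y) 0 0 = eta].
exists (fun i => fs i `&` H).
move=> G [[c [g [valid Gdef]]] [s [[K1 K2] [G1 G2]]]].
have [p [A [b [QE minp]]]] := min_desc polyQ.
subst Q.
have [x0 [X0 [Gx0 _]]] := G1.
have GK : G `<=` hset A b `&` H by rewrite Gdef => x [].
have Gc : forall x, G x -> (c^T *m x) 0 0 = g by rewrite Gdef => x [].
have [z [Kz nGz]] : exists z, (hset A b `&` H) z /\ ~ G z.
  apply: contrapT => nex; apply: G2; apply: (aff_sub _ K1) => x Kx.
  by apply: contrapT => nG; apply: nex; exists x.
have cz : (c^T *m z) 0 0 < g.
  rewrite lt_def valid // andbT; apply/negP => /eqP e; apply: nGz.
  by rewrite Gdef; split.
have Gmid x y : G x -> G y -> G (2^-1 *: (x + y)).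
  rewrite Gdef => -[[hx Hx] cx] [[hy Hy] cy]; split; last exact: eq_mid.
  by split; [apply: hset_mid | apply: eq_mid].
have [xg [Gxg xgs]] := relint Gmid Gx0 (fun x Gx => (GK x Gx).1).
have [j [jt zj]] : exists j, (forall y, G y -> (A *m y) j 0 = b j 0) /\ (A *m z) j 0 < b j 0.
  apply: contrapT => nj.
  have nj' i : (forall y, G y -> (A *m y) i 0 = b i 0) -> (A *m z) i 0 = b i 0.
    move=> hi; apply/eqP; rewrite eq_le Kz.1 /= leNgt; apply/negP => zi.
    by apply: nj; exists i.
  have [e [e0 He]] : exists e : R, 0 < e /\ forall i : 'I_p,
      (exists y, G y /\ (A *m y) i 0 < b i 0) ->
      ((A *m xg) i 0 - b i 0) + e * ((A *m xg) i 0 - (A *m z) i 0) < 0.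
    by apply: eps_fin => i ex; have := xgs i ex; lra.
  pose w := xg + e *: (xg - z).
  have Ew (M : 'M[R]_(1 + 0, n)) : (M *m w) 0 0 = (M *m xg) 0 0 + e * ((M *m xg) 0 0 - (M *m z) 0 0).
    by rewrite Ent mulmxBr entryB.
  have Kw : (hset A b `&` H) w.
    split.
      move=> i; rewrite Ent mulmxBr entryB.
      case: (pselect (exists y, G y /\ (A *m y) i 0 < b i 0)) => [ex|nex].
        by have := He i ex; lra.
      have ti : forall y, G y -> (A *m y) i 0 = b i 0.
        move=> y Gy; apply/eqP; rewrite eq_le (GK y Gy).1 /= leNgt; apply/negP => yi.
        by apply: nex; exists y.
      by rewrite (ti _ Gxg) (nj' i ti) subrr mulr0 addr0.
    by rewrite /H /= Ew (GK _ Gxg).2 Kz.2 subrr mulr0 addr0.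
  have := valid _ Kw; rewrite Ew (Gc _ Gxg).
  have : 0 < e * (g - (c^T *m z) 0 0) by apply: mulr_gt0; lra.
  lra.
have fct := facet_row minp Kz.1 zj.
have [i Fi] := Hfs _ fct.
exists i; rewrite -Fi.
apply/seteqP; split.
  move=> y Gy; have [Ky Hy] := GK y Gy; split=> //; split=> //.
  by rewrite rowE'; apply: jt.
move=> y [[Qy yj] Hy]; apply: contrapT => nGy.
have cy : (c^T *m y) 0 0 != g.
  by apply/eqP => e; apply: nGy; rewrite Gdef; split.
have a1 : aff_indep_pts ([set x | hset A b x /\ ((row j A)^T^T *m x) 0 0 = b j 0] `&` H) s.+1.
  apply: (aff_ext G1 _ Gc _ cy) => //.
  move=> x Gx; have [Kx Hx] := GK x Gx; split=> //; split=> //.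
  by rewrite rowE'; apply: jt.
apply: K2; apply: (aff_ext a1 (c := (row j A)^T) (g := b j 0)) => //.
- by move=> x [[Qx _] Hx].
- by move=> x [[_ ->] _].
- exact: Kz.
- by rewrite rowE'; apply/eqP => e; move: zj; rewrite e ltxx.
Qed.


Lemma hset_inter n p1 p2 (A1 : 'M[R]_(p1,n)) b1 (A2 : 'M[R]_(p2,n)) b2 :
  hset A1 b1 `&` hset A2 b2 = hset (col_mx A1 A2) (col_mx b1 b2).
Proof.
apply/seteqP; split.
  move=> x [h1 h2] i; rewrite mul_col_mx -(splitK i); case: (split i) => k /=.
    by rewrite !col_mxEu; apply: h1.
  by rewrite !col_mxEd; apply: h2.
move=> x hx; split=> k.
  by have := hx (lshift p2 k); rewrite mul_col_mx !col_mxEu.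
by have := hx (rshift p1 k); rewrite mul_col_mx !col_mxEd.
Qed.

Lemma hyp_hset n (h : 'cV[R]_n) (eta : R) :
  [set y | (h^T *m y) 0 0 = eta] =
  hset (col_mx h^T (- h^T) : 'M[R]_(1 + 1, n)) (col_mx eta%:M (- eta)%:M).
Proof.
apply/seteqP; split.
  move=> x /= hx i; rewrite mul_col_mx -(splitK i); case: (split i) => k /=.
    by rewrite !col_mxEu (ord1 k) hx mxE.
  by rewrite !col_mxEd (ord1 k) mulNmx entryN hx !mxE /=; lra.
move=> x hx /=.
have := hx (lshift 1 0); rewrite mul_col_mx !col_mxEu [eta%:M _ _]mxE /= => h1.
have := hx (rshift 1 0); rewrite mul_col_mx !col_mxEd mulNmx entryN [(- eta)%:M _ _]mxE /= => h2.
lra.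
Qed.

Lemma polyhedron_hyp n (Q : set 'cV[R]_n) (h : 'cV[R]_n) eta :
  polyhedron Q -> polyhedron (Q `&` [set y | (h^T *m y) 0 0 = eta]).
Proof.
move=> [p [A [b ->]]]; rewrite hyp_hset.
exists (p + (1 + 1))%N, (col_mx A (col_mx h^T (- h^T))), (col_mx b (col_mx eta%:M (- eta)%:M)).
exact: hset_inter.
Qed.

Lemma affine_sum n p (M : 'M[R]_(p,n)) (c : 'cV[R]_p) N (lam : 'I_N -> R) (pts : 'I_N -> 'cV[R]_n) :
  \sum_(i < N) lam i = 1 ->
  M *m (\sum_(i < N) lam i *: pts i) + c = \sum_(i < N) lam i *: (M *m pts i + c).
Proof.
move=> s1; rewrite mulmx_sumr.
under [RHS]eq_bigr do rewrite scalerDr.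
rewrite big_split /= -scaler_suml s1 scale1r; congr (_ + _).
by apply: eq_bigr => i _; rewrite scalemxAr.
Qed.

Lemma lin_sum n (c : 'cV[R]_n) N (lam : 'I_N -> R) (pts : 'I_N -> 'cV[R]_n) :
  (c^T *m (\sum_(i < N) lam i *: pts i)) 0 0 = \sum_(i < N) lam i * (c^T *m pts i) 0 0.
Proof.
rewrite mulmx_sumr summxE; apply: eq_bigr => i _; by rewrite -scalemxAr entryZ.
Qed.

End Aux.

Theorem mainTheorem12 (R : realType) (d d' m k : nat)
  (P : set 'cV[R]_d) (P' : set 'cV[R]_d') :
  polyhedron P -> polyhedron P' -> P !=set0 -> P' !=set0 ->
  (exists (F : set 'cV[R]_d) (f : 'cV[R]_d -> 'cV[R]_d'),
      is_face P F /\ is_affine f /\ P' = f @` F) ->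
  has_MILEF m k P -> has_MILEF m k P'.
Proof.
move=> _ _ _ _ [F [f [[c [dl [valid Fdef]]] [[Mf [cf fE]] P'E]]]].
move=> [l [Q [sg [pi [pQ [fQ [asg [[Mp [cp pE]] PE]]]]]]]].
pose h := (c^T *m Mp)^T. pose eta := dl - (c^T *m cp) 0 0.
have hyE y : ((h^T *m y) 0 0 = eta) <-> ((c^T *m pi y) 0 0 = dl).
  by rewrite /h trmxK pE mulmxDr mulmxA entryD /eta; split => H; lra.
pose Q' := Q `&` [set y | (h^T *m y) 0 0 = eta].
exists l, Q', sg, (f \o pi).
split; first exact: polyhedron_hyp.
split; first exact: facet_section.
split; first exact: asg.
split.
  exists (Mf *m Mp), (Mf *m cp + cf) => x /=.
  by rewrite fE pE mulmxDr mulmxA addrA.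
rewrite P'E Fdef; apply/seteqP; split.
- move=> _ [x [Px cx] <-].
  have Px' := Px; rewrite PE in Px'.
  have [N [lam [pts [Hp [l0 [s1 xE]]]]]] := Px'.
  have Ppts i : P (pts i).
    rewrite PE; exists 1%N, (fun=> 1), (fun=> pts i); split=> //; split=> //.
    by rewrite !big_ord1 scale1r.
  have zero i : lam i != 0 -> (c^T *m pts i) 0 0 = dl.
    move=> li.
    have S0 : \sum_(i < N) lam i * (dl - (c^T *m pts i) 0 0) = 0.
      under eq_bigr do rewrite mulrBr.
      by rewrite sumrB -mulr_suml s1 mul1r -lin_sum -xE cx subrr.
    have nn : forall i0 : 'I_N, true -> 0 <= lam i0 * (dl - (c^T *m pts i0) 0 0).
      by move=> i0 _; apply: mulr_ge0 => //; rewrite subr_ge0; apply: valid.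
    have HH := psumr_eq0P nn S0; have := HH i isT.
    by move=> /eqP; rewrite mulf_eq0 (negPf li) /= subr_eq0 => /eqP ->.
  have [i0 li0] : exists i0, lam i0 != 0.
    apply: contrapT => H0; move: s1; rewrite big1 => [/eqP|i _].
      by rewrite eq_sym oner_eq0.
    by apply/eqP; apply: contrapT => /negP h1; apply: H0; exists i.
  pose pts' i := if lam i == 0 then pts i0 else pts i.
  have good j : lam j != 0 -> ((f \o pi) @` (Q' `&` sg @^-1` intvec (k:=k))) (f (pts j)).
    move=> lj; have [y [Qy Iy] pyE] := Hp j.
    exists y; last by rewrite /= pyE.
    split=> //; split=> //; apply/hyE; rewrite pyE; exact: zero.
  exists N, lam, (fun i => f (pts' i)); split.
    by move=> i; rewrite /pts'; case: eqP => [_|/eqP li]; apply: good.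
  split=> //; split=> //.
  have -> : x = \sum_(i < N) lam i *: pts' i.
    rewrite xE; apply: eq_bigr => i _; rewrite /pts'; case: eqP => // ->.
    by rewrite !scale0r.
  rewrite fE; under [RHS]eq_bigr do rewrite fE.
  exact: affine_sum.
- move=> x' [N [lam [pts [Hp [l0 [s1 xE]]]]]].
  have Hp' : forall i, exists y, (Q' `&` sg @^-1` intvec (k:=k)) y /\ (f \o pi) y = pts i.
    by move=> i; have [y ? ?] := Hp i; exists y.
  have [ys Hys] := choice Hp'.
  exists (\sum_(i < N) lam i *: pi (ys i)).
    split.
      rewrite PE; exists N, lam, (fun i => pi (ys i)); split=> //.
      by move=> i; have [[[Qy _] Iy] _] := Hys i; exists (ys i); first split.
    rewrite lin_sum.
    under eq_bigr => i _ do rewrite (proj1 (hyE _) (Hys i).1.1.2).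
    by rewrite -mulr_suml s1 mul1r.
  rewrite fE affine_sum // xE; apply: eq_bigr => i _.
  by rewrite -fE; congr (_ *: _); exact: (Hys i).2.
Qed.
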